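(* For every graph $G$ with $n$ vertices and $m$ edges, \[ 2\sum_{uv\in E(G)} d(u)d(v)\geq 4m^2+\sum_{u\in V(G)}\bigl(d^3(u)-n\,d^2(u)\bigr). \]
   Context: All graphs are finite, simple and undirected. $d(u)$ is the degree of vertex $u$; the sum over $uv\in E(G)$ runs over each edge once. *)

(* Defs.v *)
From mathcomp Require Import all_boot all_order all_algebra.
Set Implicit Arguments. Unset Strict Implicit. Unset Printing Implicit Defensive.
Import Order.TTheory GRing.Theory Num.Theory.

Definition simple_graph (T : finType) (e : rel T) : Prop :=
  symmetric e /\ irreflexive e.

Definition deg (T : finType) (e : rel T) (u : T) : nat := #|[set v | e u v]|.

Definition edges (T : finType) (e : rel T) : {set {set T}} :=
  [set E : {set T} | [exists u, exists v, (e u v) && (E == [set u; v])]].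

(* Main.v *)
Require Import Defs.
From mathcomp Require Import all_boot all_order all_algebra.
Import Order.TTheory GRing.Theory Num.Theory.
From mathcomp Require Import ring lra.
Local Open Scope ring_scope.

Section S.
Variables (T : finType) (e : rel T).
Hypothesis (sym : symmetric e) (irr : irreflexive e).

Lemma pair_key (a b x y : T) : e a b ->
  (e x y && ([set x; y] == [set a; b])) = ((x, y) \in [set (a, b); (b, a)]).
Proof.
move=> eab; apply/idP/idP.
- case/andP=> exy /eqP Hs.
  have hx : x \in [set a; b] by rewrite -Hs set21.
  have hy : y \in [set a; b] by rewrite -Hs set22.
  have nxy : x != y by apply/eqP=> Exy; move: exy; rewrite Exy irr.
  rewrite in_set2 !xpair_eqE.
  move: nxy; case/set2P: hx => ->; case/set2P: hy => ->;
    by rewrite ?eqxx ?orbT.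
- rewrite in_set2 !xpair_eqE; case/orP=> /andP[/eqP -> /eqP ->].
  + by rewrite eab eqxx.
  + by rewrite sym eab setUC eqxx.
Qed.

Lemma edge_sum (H : {set T} -> int) :
  \sum_u \sum_(v | e u v) H [set u; v] = 2 * \sum_(E in edges e) H E.
Proof.
rewrite pair_big_dep /=.
rewrite (partition_big (fun p : T * T => [set p.1; p.2]) (mem (edges e))) /=;
  last first.
  move=> [x y] /= exy; rewrite inE; apply/existsP; exists x; apply/existsP; exists y.
  by rewrite exy eqxx.
rewrite big_distrr /=; apply: eq_bigr => E.
rewrite inE => /existsP[a /existsP[b /andP[eab /eqP ->]]].
rewrite (eq_bigr (fun _ => H [set a; b])); last by move=> p /andP[_ /eqP ->].
rewrite (eq_bigl (mem [set (a, b); (b, a)])); last first.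
  by move=> [x y] /=; rewrite pair_key.
rewrite sumr_const cards2.
have -> : (a, b) != (b, a).
  rewrite xpair_eqE; apply/negP=> /andP[/eqP Eab _]; move: eab; by rewrite Eab irr.
by rewrite mulr_natl.
Qed.

End S.
Arguments edge_sum {T e}.

Lemma K (T : finType) (e : rel T) (sym : symmetric e) (f : T -> int) :
  0 <= \sum_u \sum_(v | ~~ e u v) (f u * f u - f u * f v).
Proof.
set S := \sum_u _.
have HS : S = \sum_u \sum_(v | ~~ e u v) (f v * f v - f v * f u).
  rewrite /S (eq_bigr (fun u => \sum_v (if ~~ e u v then f u * f u - f u * f v else 0)));
    last by move=> u _; rewrite big_mkcond.
  rewrite exchange_big /=; apply: eq_bigr => v _.
  by rewrite [RHS]big_mkcond; apply: eq_bigr => u _; rewrite sym.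
have H2 : 0 <= S + S.
  rewrite {2}HS /S -big_split /=; apply: sumr_ge0 => u _.
  rewrite -big_split /=; apply: sumr_ge0 => v _.
  have -> : f u * f u - f u * f v + (f v * f v - f v * f u) = (f u - f v) ^+ 2.
    by rewrite expr2; ring.
  exact: sqr_ge0.
lra.
Qed.

Theorem proposition2 (T : finType) (e : rel T) :
  simple_graph e ->
  2%:Z * (\sum_(E in edges e) \prod_(x in E) (deg e x)%:Z) >=
  4%:Z * (#|edges e|%:Z) ^+ 2
  + \sum_(u : T) ((deg e u)%:Z ^+ 3 - (#|T|)%:Z * (deg e u)%:Z ^+ 2).
Proof.
move=> [sym irr].
have Hprod : 2%:Z * (\sum_(E in edges e) \prod_(x in E) (deg e x)%:Z) =
    \sum_u \sum_(v | e u v) (deg e u)%:Z * (deg e v)%:Z.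
  rewrite -(edge_sum sym irr (fun E => \prod_(x in E) (deg e x)%:Z)).
  apply: eq_bigr => u _; apply: eq_bigr => v euv.
  have nuv : u != v by apply/eqP=> E; move: euv; rewrite E irr.
  by rewrite big_setU1 /= ?big_set1 // inE.
have Hcnt : forall u (c : int), \sum_(v | e u v) c = c * (deg e u)%:Z.
  move=> u c; rewrite (eq_bigl (fun v => v \in [set v | e u v])); last by move=> v; rewrite in_set.
  by rewrite sumr_const /deg -mulr_natr -natz.
have Hm : 2%:Z * #|edges e|%:Z = \sum_u (deg e u)%:Z.
  have := edge_sum sym irr (fun _ => 1).
  rewrite sumr_const => h.
  have h' : \sum_u \sum_(v | e u v) (1:int) = \sum_u (deg e u)%:Z.
    by apply: eq_bigr => u _; rewrite Hcnt mul1r.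
  rewrite -h' h; congr (_ * _); apply/esym; apply: natz.
rewrite Hprod.
have -> : 4%:Z * (#|edges e|%:Z) ^+ 2 = (2%:Z * #|edges e|%:Z) ^+ 2.
  by rewrite exprMn.
rewrite Hm expr2 mulr_suml.
set d := fun u => (deg e u)%:Z.
have E1 : forall u, (deg e u)%:Z * (\sum_u0 (deg e u0)%:Z) =
   \sum_(v | e u v) d u * d v + \sum_(v | ~~ e u v) d u * d v.
  by move=> u; rewrite mulr_sumr (bigID (fun v => e u v)) /=.
have E2 : forall u, (deg e u)%:Z ^+ 3 - #|T|%:Z * (deg e u)%:Z ^+ 2 =
    - \sum_(v | ~~ e u v) d u * d u.
  move=> u.
  have h1 : \sum_(v : T) d u * d u = \sum_(v | e u v) d u * d u + \sum_(v | ~~ e u v) d u * d u.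
    by rewrite [LHS](bigID (fun v => e u v)) /=.
  have h2 : \sum_(v : T) d u * d u = d u * d u * #|T|%:Z by rewrite sumr_const -mulr_natr -natz.
  have h3 := Hcnt u (d u * d u).
  rewrite /d /= in h1 h2 h3 *.
  rewrite expr2 exprSr expr2.
  lra.
rewrite (eq_bigr _ (fun u _ => E1 u)) (eq_bigr _ (fun u _ => E2 u)).
have := @K T e sym d.
rewrite !big_split /= sumrN.
under eq_bigr => u _ do rewrite sumrB.
rewrite sumrB /d.
lra.
Qed.
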